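(* Let $A_1,\ldots,A_d$ be Hermitian $n\times n$ matrices and let $M_H\subset\mathbb C^{n}_z\times\mathbb C^{d}_w$ be the model quadric $$M_H=\{(z,w)\in\mathbb C^n\times\mathbb C^d:\ \Re e\, w_j={}^t\bar z A_j z,\ j=1,\ldots,d\}.$$ Then $M_H$ is of finite type at $0$ with Segre number $2$ at $0$ if and only if there exists $V\in\mathbb C^n$ such that the $n\times d$ matrix whose $j$-th column is $A_jV$ has rank $d$.
   Context: Segre sets (Baouendi–Ebenfelt–Rothschild) of a real-analytic generic submanifold $M\subset\mathbb C^N$ at $p\in M$: for $q$ near $p$ let $Q_q$ be the Segre variety of $q$ (obtained by complexifying the defining equations of $M$ and fixing the conjugate variables at $\bar q$); for $M_H$ this is $Q_{(z',w')}=\{(z,w): w_j=-\overline{w'_j}+2\,{}^t\overline{z'}A_jz,\ j=1,\dots,d\}$. Set $S_0(p)=\{p\}$ and $S_{k+1}(p)=\bigcup_{q\in S_k(p)}Q_q$; $S_k(p)$ is the image of a holomorphic Segre map $v^k$ defined on an open set of $\mathbb C^{nk}$ (here $n=\dim_{\mathbb C}$ of the CR tangent space), and $d_k(p)$ denotes the generic rank of $v^k$. $M$ is of finite type at $p$ iff $d_k(p)=N$ for some $k$, and the Segre number of $M$ at $p$ is the smallest such $k$. Here $N=n+d$. *)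

(* Defs.v *)
From HB Require Import structures.
From mathcomp Require Import all_boot all_order all_algebra.
From mathcomp Require Import complex.
From mathcomp Require Import all_classical all_reals all_analysis.
Set Implicit Arguments. Unset Strict Implicit. Unset Printing Implicit Defensive.
Import Order.TTheory GRing.Theory Num.Theory.
Import numFieldNormedType.Exports.
Local Open Scope ring_scope.

(* The complex numbers: [R[i]] for [R : realType], packaged as an (opaque-structure)
   numClosedFieldType so that mathcomp-analysis' topology/normed structures on
   numFieldTypes (and on matrices over them) apply to it. *)
Definition Cx (R : realType) : numClosedFieldType := R[i].

Section Segre.
Variables (R : realType) (n d : nat) (A : 'I_d -> 'M[Cx R]_n).
Local Notation C := (Cx R).

Definition conjv m (v : 'rV[C]_m) : 'rV[C]_m := map_mx (fun x : C => x^*) v.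

Definition model_quadric : set ('rV[C]_n * 'rV[C]_d) :=
  [set p : 'rV[C]_n * 'rV[C]_d | forall j : 'I_d,
     'Re (p.2 0 j) = 'Re ((conjv p.1 *m A j *m p.1^T) 0 0)].

Definition segre_variety (q : 'rV[C]_n * 'rV[C]_d) : set ('rV[C]_n * 'rV[C]_d) :=
  [set p : 'rV[C]_n * 'rV[C]_d | p.2 = \row_j (- (q.2 0 j)^* + 2 * (conjv q.1 *m A j *m p.1^T) 0 0)].

(* Holomorphic defining function Q(z, chi, tau) of the Segre varieties:
   Q_q = {w = Q(z, conj z', conj w')}. *)
Definition segreQ (z : 'rV[C]_n) (chi : 'rV[C]_n) (tau : 'rV[C]_d) : 'rV[C]_d :=
  \row_j (- tau 0 j + 2 * (chi *m A j *m z^T) 0 0).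

(* Segre maps at p = 0 (Baouendi-Ebenfelt-Rothschild):
   v^0 = p = 0,
   v^(k+1)(t^1,...,t^(k+1)) = (t^(k+1), Q(t^(k+1), \bar v^k(t^1,...,t^k))),
   where \bar v^k(t) = conj (v^k (conj t)).
   The list below is given most recent parameter first: [:: t^k; ...; t^1]. *)
Fixpoint segre_aux (fuel : nat) (ts : seq 'rV[C]_n) : 'rV[C]_n * 'rV[C]_d :=
  match fuel, ts with
  | fuel'.+1, t :: ts' =>
      let q := segre_aux fuel' (map (@conjv n) ts') in
      (t, segreQ t (conjv q.1) (conjv q.2))
  | _, _ => (0, 0)
  end.

Definition segre_seq (ts : seq 'rV[C]_n) : 'rV[C]_n * 'rV[C]_d :=
  segre_aux (size ts) ts.

(* v^k as a map C^{nk} -> C^N, N = n + d; row i of T is the parameter t^(i+1). *)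
Definition segre_map (k : nat) (T : 'M[C]_(k, n)) : 'rV[C]_(n + d) :=
  let p := segre_seq (rev [seq row i T | i <- enum 'I_k]) in row_mx p.1 p.2.

Definition segre_jac_rank (k : nat) (T : 'M[C]_(k, n)) : nat :=
  \rank (lin_mx ('d (@segre_map k) T)).

(* d_k(0) = r : the generic rank of v^k (the maximal rank of its Jacobian) is r *)
Definition segre_generic_rank_is (k r : nat) : Prop :=
  (exists T : 'M[C]_(k, n), segre_jac_rank T = r) /\
  (forall T : 'M[C]_(k, n), (segre_jac_rank T <= r)%N).

Definition finite_type_at0 : Prop :=
  exists k, segre_generic_rank_is k (n + d).

Definition segre_number_at0 (m : nat) : Prop :=
  segre_generic_rank_is m (n + d) /\
  (forall k, (k < m)%N -> ~ segre_generic_rank_is k (n + d)).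

End Segre.

(* Main.v *)
Require Import Defs.
From HB Require Import structures.
From mathcomp Require Import all_boot all_order all_algebra.
From mathcomp Require Import complex.
From mathcomp Require Import all_classical all_reals all_analysis.
From mathcomp Require Import ring.
Set Implicit Arguments. Unset Strict Implicit. Unset Printing Implicit Defensive.
Import Order.TTheory GRing.Theory Num.Theory.
Import numFieldNormedType.Exports.
Local Open Scope ring_scope.
Lemma row_full_lin (K : fieldType) m1 n1 m2 n2 (g : {linear 'M[K]_(m1,n1) -> 'M[K]_(m2,n2)}) :
  row_full (lin_mx g) <-> forall W, exists X, g X = W.
Proof.
split.
  move=> /row_fullP [B HB] W.
  exists (vec_mx (mxvec W *m B)).
  apply: (can_inj (@mxvecK _ _ _)).
  by rewrite -mul_vec_lin vec_mxK -mulmxA HB mulmx1.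
move=> H; rewrite -sub1mx; apply/row_subP => i.
have [X HX] := H (vec_mx (row i 1%:M)).
apply/submxP; exists (mxvec X).
by rewrite mul_vec_lin HX vec_mxK.
Qed.

Section D.
Variables (K : numFieldType) (V W : normedModType K).

Lemma is_diff_big (I : Type) (s : seq I) (f df : I -> V -> W) (x : V) :
  (forall i, is_diff x (f i) (df i)) ->
  is_diff x (fun y => \sum_(i <- s) f i y) (fun h => \sum_(i <- s) df i h).
Proof.
move=> H; elim: s => [|i s IH].
  have -> : (fun y => \sum_(i <- [::]) f i y) = cst 0 by apply/funext => y; rewrite big_nil.
  have -> : (fun y => \sum_(i <- [::]) df i y) = 0 by apply/funext => y; rewrite big_nil.
  exact: is_diff_cst.
have -> : (fun y => \sum_(j <- i :: s) f j y) = f i + (fun y => \sum_(j <- s) f j y).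
  by apply/funext => y; rewrite big_cons.
have -> : (fun y => \sum_(j <- i :: s) df j y) = df i + (fun y => \sum_(j <- s) df j y).
  by apply/funext => y; rewrite big_cons.
exact: is_diffD.
Qed.

Lemma is_diffZl (k dk : V -> K) (v : W) (x : V) :
  is_diff x k dk -> is_diff x (fun z => k z *: v) (fun z => dk z *: v).
Proof.
move=> H; apply: DiffDef; first exact: differentiableZl.
by rewrite diffZl // diff_val.
Qed.

Lemma is_diff_coord m p (M : 'M[K]_(m, p)) i j :
  is_diff M (fun N : 'M[K]_(m, p) => N i j) (fun N : 'M[K]_(m, p) => N i j).
Proof.
apply: DiffDef; first exact: differentiable_coord.
have @f : {linear 'M[K]_(m, p) -> K}.
  by exists (fun N : 'M[K]_(_, _) => N i j); do 2![eexists]; do ?[constructor];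
     rewrite ?mxE// => ? *; rewrite ?mxE//; move=> ?; rewrite !mxE.
rewrite (_ : (fun _ => _) = f) // diff_lin //; exact: coord_continuous.
Qed.

Lemma is_diff_coordM m p (M : 'M[K]_(m, p)) i j i' j' :
  is_diff M (fun N : 'M[K]_(m, p) => N i j * N i' j')
    (fun N : 'M[K]_(m, p) => M i j * N i' j' + M i' j' * N i j).
Proof.
have := is_diffM (is_diff_coord M i j) (is_diff_coord M i' j').
by [].
Qed.
End D.
Section S.
Variables (R : realType) (n d : nat) (A : 'I_d -> 'M[Cx R]_n).
Local Notation C := (Cx R).

Lemma conjvK m (v : 'rV[C]_m) : conjv (conjv v) = v.
Proof. by apply/matrixP => i j; rewrite !mxE conjCK. Qed.

Lemma conjv0 m : conjv (0 : 'rV[C]_m) = 0.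
Proof. by apply/matrixP => i j; rewrite !mxE conjC0. Qed.

Definition F2 (T : 'M[C]_(2, n)) : 'rV[C]_(n + d) :=
  row_mx (row 1 T) (\row_j (2 * (row 0 T *m A j *m (row 1 T)^T) 0 0)).

Lemma segre_map2E : @segre_map R n d A 2 = F2.
Proof.
apply/funext => T.
rewrite /segre_map /segre_seq.
have -> : [seq row i T | i <- enum 'I_2] = [:: row 0 T; row 1 T].
  by rewrite enum_ordSl enum_ordSl enum_ord0 /=; congr [:: row _ T; row _ T]; apply/val_inj.
rewrite /= /F2 conjvK.
congr row_mx; apply/matrixP => i j; rewrite !mxE.
rewrite conjv0 mul0mx big1 ?mulr0 ?conjC0 ?oppr0 ?add0r ?conjC0 ?oppr0 ?add0r //.
by move=> k _; rewrite mxE mul0r.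
Qed.

Definition Bf (u v : 'rV[C]_n) : 'rV[C]_d := \row_j (2 * (u *m A j *m v^T) 0 0).
Definition ev (b : 'I_n) : 'rV[C]_(n + d) := row_mx (delta_mx 0 b) 0.
Definition cv (a b : 'I_n) : 'rV[C]_(n + d) := row_mx 0 (\row_j (2 * A j a b)).

Lemma E1 (x : 'rV[C]_n) : row_mx x 0 = \sum_b x 0 b *: ev b.
Proof.
apply/matrixP => i k; rewrite summxE.
under eq_bigr do rewrite !mxE.
rewrite !mxE; case: splitP => k' _ /=.
  rewrite [in LHS](row_sum_delta x) summxE; apply: eq_bigr => b _.
  by rewrite !mxE.
by rewrite mxE big1 // => b _; rewrite mulr0.
Qed.

Lemma E2 (u v : 'rV[C]_n) : row_mx 0 (Bf u v) = \sum_a \sum_b (u 0 a * v 0 b) *: cv a b.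
Proof.
apply/matrixP => i k; rewrite summxE.
under eq_bigr do rewrite summxE; under eq_bigr do under eq_bigr do rewrite !mxE.
rewrite !mxE; case: splitP => k' _ /=.
  by rewrite mxE big1 // => a _; rewrite big1 // => b _; rewrite mulr0.
rewrite /Bf !mxE big_distrr /=.
under eq_bigr do rewrite !mxE big_distrl /=.
rewrite exchange_big /=; apply: eq_bigr => a _.
rewrite big_distrr /=; apply: eq_bigr => b _.
rewrite !mxE; ring.
Qed.

Definition DF2 (T H : 'M[C]_(2, n)) : 'rV[C]_(n + d) :=
  \sum_b H 1 b *: ev b + \sum_a \sum_b (T 0 a * H 1 b + T 1 b * H 0 a) *: cv a b.

Lemma dF2 T : is_diff T F2 (DF2 T).
Proof.
have -> : F2 = (fun T : 'M[C]_(2, n) => \sum_b T 1 b *: ev b) +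
               (fun T : 'M[C]_(2, n) => \sum_a \sum_b (T 0 a * T 1 b) *: cv a b).
  apply/funext => T'; rewrite /F2 /=.
  transitivity (row_mx (row 1 T') 0 + row_mx 0 (Bf (row 0 T') (row 1 T'))).
    by rewrite add_row_mx addr0 add0r.
  rewrite E1 E2; congr (_ + _).
    by apply: eq_bigr => b _; rewrite mxE.
  by apply: eq_bigr => a _; apply: eq_bigr => b _; rewrite !mxE.
apply: is_diffD.
  apply: is_diff_big => b; exact: is_diffZl (is_diff_coord T 1 b).
apply: is_diff_big => a; apply: is_diff_big => b.
exact: is_diffZl (is_diff_coordM T 0 a 1 b).
Qed.

Lemma DF2E T H : DF2 T H =
  row_mx (row 1 H) (Bf (row 0 T) (row 1 H) + Bf (row 0 H) (row 1 T)).
Proof.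
have -> : forall (X Y : 'rV[C]_d), row_mx (row 1 H) (X + Y) =
    row_mx (row 1 H) 0 + (row_mx 0 X + row_mx 0 Y).
  by move=> X Y; rewrite !add_row_mx !addr0 !add0r.
rewrite /DF2 E1 E2 E2; congr (_ + _).
  by apply: eq_bigr => b _; rewrite mxE.
rewrite -big_split /=; apply: eq_bigr => a _.
rewrite -big_split /=; apply: eq_bigr => b _.
by rewrite !mxE -scalerDl mulrC [_ * H 0 a]mulrC.
Qed.

Lemma dsegre2 T H : 'd (@segre_map R n d A 2) T H =
  row_mx (row 1 H) (Bf (row 0 T) (row 1 H) + Bf (row 0 H) (row 1 T)).
Proof.
by rewrite segre_map2E (@diff_val _ _ _ _ _ _ _ (dF2 T)) DF2E.
Qed.

Definition Mv (v : 'cV[C]_n) : 'M[C]_(n, d) := \matrix_(i < n, j < d) (A j *m v) i 0.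

Lemma BfM h t : Bf h t = 2 *: (h *m Mv t^T).
Proof.
apply/rowP => j; rewrite /Bf mxE [in RHS]mxE -mulmxA mxE [in RHS]mxE; congr (_ * _).
by apply: eq_bigr => i _; rewrite !mxE.
Qed.

Lemma Bf0r u : Bf u 0 = 0.
Proof. by apply/rowP => j; rewrite /Bf mxE trmx0 mulmx0 !mxE mulr0. Qed.

Lemma Bf0l v : Bf 0 v = 0.
Proof. by apply/rowP => j; rewrite /Bf mxE !mul0mx !mxE mulr0. Qed.

Lemma rowif (a b : 'rV[C]_n) :
  row 0 (\matrix_(i < 2, k < n) if i == 0 then a 0 k else b 0 k) = a /\
  row 1 (\matrix_(i < 2, k < n) if i == 0 then a 0 k else b 0 k) = b.
Proof. by split; apply/rowP => k; rewrite !mxE. Qed.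
End S.

Unset Implicit Arguments.
Theorem lemma1p2 (R : realType) (n d : nat) (A : 'I_d -> 'M[Cx R]_n)
  (hd : (0 < d)%N)
  (hA : forall j : 'I_d, (A j)^T = map_mx (fun x : Cx R => x^*) (A j)) :
  (finite_type_at0 A /\ segre_number_at0 A 2) <->
  (exists V : 'cV[Cx R]_n,
     \rank (\matrix_(i < n, j < d) (A j *m V) i 0) = d).
Proof.
split.
  move=> [_ [[[T HT] _] _]].
  exists (row 1 T)^T.
  have RF : row_full (lin_mx ('d (@segre_map R n d A 2) T)).
    by move: HT; rewrite /row_full /segre_jac_rank => ->; rewrite mul1n.
  have surj := (row_full_lin _).1 RF.
  apply/eqP; rewrite eqn_leq rank_leq_col /= col_leq_rank.
  rewrite -sub1mx; apply/row_subP => i.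
  have [H HH] := surj (row_mx 0 (row i 1%:M)).
  rewrite dsegre2 in HH; move/eq_row_mx: HH => [H1 H2].
  rewrite H1 Bf0r add0r BfM in H2.
  apply/submxP; exists (2 *: row 0 H).
  by rewrite -H2 scalemxAl.
move=> [V HV].
have RFM : row_full (Mv A V) by rewrite /row_full; apply/eqP.
have [B HB] := row_fullP RFM.
have G2 : segre_generic_rank_is A 2 (n + d).
  split; last first.
    by move=> T; apply: leq_trans (rank_leq_col _) _; rewrite mul1n.
  pose T := \matrix_(i < 2, k < n) if i == 0 then (0 : 'rV[Cx R]_n) 0 k else V^T 0 k.
  have [T0 T1] := rowif (0 : 'rV[Cx R]_n) V^T.
  exists T.
  have RF : row_full (lin_mx ('d (@segre_map R n d A 2) T)).
    apply/row_full_lin => W.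
    pose X := \matrix_(i < 2, k < n)
      if i == 0 then (2^-1 *: (rsubmx W *m B)) 0 k else lsubmx W 0 k.
    have [X0 X1] := rowif (2^-1 *: (rsubmx W *m B)) (lsubmx W).
    exists X.
    rewrite dsegre2 X0 X1 T0 T1 Bf0l add0r BfM trmxK -scalemxAl -mulmxA HB mulmx1.
    by rewrite scalerA divff ?scale1r ?hsubmxK // pnatr_eq0.
  by move/eqP: RF; rewrite /segre_jac_rank => ->; rewrite mul1n.
split; first by exists 2%N.
split => // k.
case: k => [|[|k]] // _ [[T HT] _].
  by have := rank_leq_row (lin_mx ('d (@segre_map R n d A 0) T)); rewrite /segre_jac_rank in HT; rewrite HT mul0n leqn0 addn_eq0 => /andP [_ /eqP Hd]; rewrite Hd in hd.
have := rank_leq_row (lin_mx ('d (@segre_map R n d A 1) T)); rewrite /segre_jac_rank in HT; rewrite HT mul1n -{2}(addn0 n) leq_add2l leqn0 => /eqP Hd.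
by rewrite Hd in hd.
Qed.
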